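(* Let $k\ge0$ and let $n$ be a positive integer of length $l$ with $k(n)\le k$. Then $$\sum_{\substack{m:\ \mathrm{ld}_l(m)=n\\ k(m)=k}}\frac1m=\sum_{m=0}^{\infty}\frac{v_{k-k(n);m}}{(n+1)^{m+1}},$$ and the right-hand side is a series of positive terms converging geometrically.
   Context: Fix $b\ge2$ and $d\in\{0,\dots,b-1\}$. For an integer $n\ge0$, its length $l(n)$ is the smallest $l\ge0$ with $n<b^l$, and $k(n)$ is the number of occurrences of $d$ in its base-$b$ representation without leading zeros. For $m>0$ of length $q\ge l$, $\mathrm{ld}_l(m)=\lfloor m/b^{q-l}\rfloor$. A string is a finite sequence $X=(d_l,\dots,d_1)$ of digits in $\{0,\dots,b-1\}$ (leading zeros allowed), of length $|X|=l\ge0$; its value is $n(X)=\sum_{i=1}^{l}d_ib^{i-1}$ ($0$ for the empty string). For $k\ge0$, $\mu_k=\sum_{X}b^{-|X|}\delta_{n(X)/b^{|X|}}$, the sum over all strings $X$ containing $d$ exactly $k$ times; it is a finite measure on $[0,1)$ of total mass $b$. The complementary moments are $v_{k;m}=\int_{[0,1)}(1-x)^m\,d\mu_k(x)$ (with $0^0=1$). *)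

(* Defs.v *)
From mathcomp Require Import all_boot all_order all_algebra.
From mathcomp Require Import all_classical all_reals all_analysis.
Set Implicit Arguments. Unset Strict Implicit. Unset Printing Implicit Defensive.
Import Order.TTheory GRing.Theory Num.Theory.

(* length l(n): smallest l >= 0 with n < b^l (searched in 0..n, which
   suffices since n < 2^n <= b^n for b >= 2) *)
Definition len (b n : nat) : nat := find (fun l => n < b ^ l) (iota 0 n.+1).

Definition digit (b n i : nat) : nat := (n %/ b ^ i) %% b.

Definition kcount (b d n : nat) : nat :=
  count (fun i => digit b n i == d) (iota 0 (len b n)).

Definition ld (b l m : nat) : nat := m %/ b ^ (len b m - l).

(* strings of length L: X i is the digit at position i+1 (weight b^i) *)
Definition strval (b L : nat) (X : {ffun 'I_L -> 'I_b}) : nat :=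
  \sum_(i < L) (X i : nat) * b ^ i.

Definition strcount (b d L : nat) (X : {ffun 'I_L -> 'I_b}) : nat :=
  #|[set i | (X i : nat) == d]|.

Local Open Scope ring_scope.

(* contribution of the strings of length L to v_{k;m} = int (1-x)^m d mu_k *)
Definition vterm (R : realType) (b d k m L : nat) : R :=
  \sum_(X : {ffun 'I_L -> 'I_b} | strcount d X == k)
     (b%:R ^- L) * (1 - (strval X)%:R / (b%:R ^+ L)) ^+ m.

Definition v (R : realType) (b d k m : nat) : R :=
  limn (fun N => \sum_(0 <= L < N) vterm R b d k m L).

(* Main.v *)
Require Import Defs.
From mathcomp Require Import all_boot all_order all_algebra.
From mathcomp Require Import all_classical all_reals all_analysis.
From mathcomp Require Import zify ring lra.
Import Order.TTheory GRing.Theory Num.Theory numFieldNormedType.Exports.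

Set Implicit Arguments. Unset Strict Implicit. Unset Printing Implicit Defensive.

Section NatPart.
Variables (b d : nat).
Hypothesis b2 : (2 <= b)%N.

Lemma bgt0 : (0 < b)%N. Proof. by apply: leq_trans b2. Qed.

Lemma len_spec m : (m < b ^ len b m)%N /\ (forall p, (p < len b m)%N -> (b ^ p <= m)%N).
Proof.
have hasP : has (fun l => (m < b ^ l)%N) (iota 0 m.+1).
  apply/hasP; exists m; first by rewrite mem_iota; lia.
  exact: ltn_expl.
have hf : (find (fun l => (m < b ^ l)%N) (iota 0 m.+1) < m.+1)%N.
  by rewrite -[X in (_ < X)%N](size_iota 0 m.+1) -has_find.
rewrite /len; split.
  have := nth_find 0 hasP.
  by rewrite nth_iota // add0n.
move=> p Hp.
have := before_find 0 Hp; rewrite nth_iota ?add0n; last by apply: ltn_trans Hp hf.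
by move/negbT; rewrite -leqNgt.
Qed.

Lemma len_eq q m : (m < b ^ q)%N -> (forall p, (p < q)%N -> (b ^ p <= m)%N) -> len b m = q.
Proof.
move=> H1 H2.
have qm : (q <= m)%N.
  case: q H1 H2 => // q _ H2.
  have := H2 q (ltnSn q); have := ltn_expl q b2; lia.
rewrite /len (_ : iota 0 m.+1 = iota 0 q ++ iota q (m.+1 - q)); last first.
  by rewrite -iotaD; congr iota; lia.
rewrite find_cat.
rewrite (_ : has _ (iota 0 q) = false); last first.
  apply/negbTE/hasPn => p; rewrite mem_iota add0n => /andP [_ /H2]; lia.
rewrite size_iota.
case E: (m.+1 - q)%N => [|r]; first lia.
by rewrite /= H1 addn0.
Qed.

Lemma digit_sum L (F : 'I_L -> nat) : (forall i, F i < b)%N ->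
  forall j : 'I_L, digit b (\sum_(i < L) F i * b ^ i) j = F j.
Proof.
elim: L F => [|L IH] F HF j; first by case: j.
rewrite big_ord_recl /= expn0 muln1.
rewrite (eq_bigr (fun i : 'I_L => F (lift ord0 i) * b ^ i * b)); last first.
  by move=> i _; rewrite /= expnS; ring.
rewrite -big_distrl /=.
case: (unliftP ord0 j) => [j'|] ->.
  rewrite /digit /= expnS divnMA addnC divnMDl ?bgt0 // (divn_small (HF ord0)) addn0.
  exact: (IH (fun i => F (lift ord0 i))).
rewrite /digit /= expn0 divn1 addnC modnMDl modn_small //.
Qed.

Lemma sum_lt L (F : 'I_L -> nat) : (forall i, F i < b)%N ->
  (\sum_(i < L) F i * b ^ i < b ^ L)%N.
Proof.
elim: L F => [|L IH] F HF; first by rewrite big_ord0.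
rewrite big_ord_recl /= expn0 muln1.
rewrite (eq_bigr (fun i : 'I_L => F (lift ord0 i) * b ^ i * b)); last first.
  by move=> i _; rewrite /= expnS; ring.
rewrite -big_distrl /= expnS.
have := IH (fun i => F (lift ord0 i)) (fun i => HF _).
have := HF ord0.
move: (\sum_(i < L) _) => S; nia.
Qed.


Definition cnt L r := count (fun i => digit b r i == d) (iota 0 L).

Lemma digit_low n L r j : (r < b ^ L)%N -> (j < L)%N ->
  digit b (n * b ^ L + r) j = digit b r j.
Proof.
move=> rL jL; rewrite /digit.
have -> : (n * b ^ L = (n * b ^ (L - j).-1 * b) * b ^ j)%N.
  rewrite -!mulnA; congr (n * _)%N; rewrite mulnA -expnSr -expnD; congr (b ^ _)%N; lia.
by rewrite divnMDl ?expn_gt0 ?bgt0 // modnMDl.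
Qed.

Lemma digit_high n L r j : (r < b ^ L)%N ->
  digit b (n * b ^ L + r) (L + j) = digit b n j.
Proof.
move=> rL; rewrite /digit expnD divnMA divnMDl ?expn_gt0 ?bgt0 //.
by rewrite (divn_small rL) addn0.
Qed.

Lemma len_window n L r : (0 < n)%N -> (r < b ^ L)%N ->
  len b (n * b ^ L + r) = (len b n + L)%N.
Proof.
move=> n0 rL; have [h1 h2] := len_spec n.
apply: len_eq.
  rewrite expnD; apply: (@leq_trans ((n.+1) * b ^ L)); first by rewrite mulSn; lia.
  by rewrite leq_mul2r h1 orbT.
move=> p hp; case: (ltnP p L) => pL.
  apply: (@leq_trans (b ^ L)); first by rewrite leq_exp2l // ltnW.
  apply: (@leq_trans (n * b ^ L)); last exact: leq_addr.
  by rewrite leq_pmull.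
apply: (@leq_trans (n * b ^ L)); last exact: leq_addr.
rewrite (_ : p = (p - L) + L)%N; last lia.
rewrite expnD leq_mul2r h2 ?orbT //; lia.
Qed.

Lemma kcount_window n L r : (0 < n)%N -> (r < b ^ L)%N ->
  kcount b d (n * b ^ L + r) = (kcount b d n + cnt L r)%N.
Proof.
move=> n0 rL; rewrite /kcount len_window // (addnC (len b n) L) iotaD count_cat add0n [RHS]addnC.
congr (_ + _)%N.
  apply: eq_in_count => i; rewrite mem_iota add0n => /andP [_ iL].
  by rewrite /= digit_low.
rewrite -[L in iota L](addn0 L) iotaDl count_map.
by apply: eq_count => j /=; rewrite digit_high.
Qed.

Lemma ld_window n L r : (0 < n)%N -> (r < b ^ L)%N ->
  ld b (len b n) (n * b ^ L + r) = n.
Proof.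
move=> n0 rL; rewrite /ld len_window // (_ : (len b n + L - len b n) = L)%N; last lia.
by rewrite divnMDl ?expn_gt0 ?bgt0 // (divn_small rL) addn0.
Qed.

Lemma cond_window n m : (len b n <= len b m)%N -> ld b (len b n) m = n ->
  exists L r, (r < b ^ L)%N /\ m = (n * b ^ L + r)%N.
Proof.
move=> _ hm; exists (len b m - len b n)%N, (m %% b ^ (len b m - len b n))%N.
split; first by rewrite ltn_pmod // expn_gt0 bgt0.
by move: hm; rewrite /ld => hm; rewrite {1}(divn_eq m (b ^ (len b m - len b n))) hm.
Qed.

Lemma strval_lt L (X : {ffun 'I_L -> 'I_b}) : (strval X < b ^ L)%N.
Proof. by apply: sum_lt => i. Qed.

Lemma digit_strval L (X : {ffun 'I_L -> 'I_b}) (j : 'I_L) :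
  digit b (strval X) j = X j.
Proof. by rewrite /strval digit_sum. Qed.

Lemma strcount_cnt L (X : {ffun 'I_L -> 'I_b}) : strcount d X = cnt L (strval X).
Proof.
rewrite /cnt -val_enum_ord count_map enumT /strcount cardsE cardE /enum_mem size_filter.
apply: eq_count => j; rewrite /= ?inE digit_strval //.
Qed.

Definition hval L (X : {ffun 'I_L -> 'I_b}) : 'I_(b ^ L) := Ordinal (strval_lt X).

Lemma hval_bij L : bijective (@hval L).
Proof.
apply: inj_card_bij; last by rewrite card_ffun !card_ord.
move=> X Y /(congr1 val) /= hXY; apply/ffunP => j.
by have := digit_strval X j; rewrite hXY digit_strval => h; apply: ord_inj; rewrite h.
Qed.

End NatPart.


Local Open Scope classical_set_scope.
Local Open Scope ring_scope.

Section RealPart.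
Variables (R : realType) (b d : nat).
Hypothesis b2 : (2 <= b)%N.
Hypothesis db : (d < b)%N.

Lemma bR0 : 0 < (b%:R : R).
Proof. rewrite ltr0n; exact: bgt0. Qed.

Lemma bL0 L : 0 < (b%:R : R) ^+ L.
Proof. by rewrite exprn_gt0 // bR0. Qed.

Definition xval L (X : {ffun 'I_L -> 'I_b}) : R := (strval X)%:R / b%:R ^+ L.

Lemma xval_ge0 L X : 0 <= @xval L X.
Proof. by rewrite /xval divr_ge0 // ltW // bL0. Qed.

Lemma xval_lt1 L X : @xval L X < 1.
Proof.
rewrite /xval ltr_pdivrMr ?bL0 // mul1r -natrX ltr_nat.
exact: strval_lt.
Qed.

Lemma geom_sum_le (r : R) N : 0 <= r < 1 -> \sum_(0 <= i < N) r ^+ i <= (1 - r)^-1.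
Proof.
move=> /andP [r0 r1].
have h : \sum_(0 <= i < N) r ^+ i * (1 - r) = 1 - r ^+ N.
  elim: N => [|N IH]; first by rewrite big_geq // expr0 subrr.
  rewrite big_nat_recr //= IH exprS; ring.
rewrite -(ler_pM2r (_ : 0 < 1 - r)); last by lra.
rewrite big_distrl /= h mulVf; last by apply: lt0r_neq0; lra.
by rewrite lerBlDr lerDl exprn_ge0.
Qed.

Definition tt : R := 2^-1.

Lemma gen_sum L :
  \sum_(X : {ffun 'I_L -> 'I_b}) tt ^+ strcount d X = (tt + (b.-1)%:R) ^+ L.
Proof.
have inner : \sum_(j : 'I_b) (if (j : nat) == d then tt else 1) = tt + (b.-1)%:R.
  rewrite (bigD1 (Ordinal db)) //= eqxx; congr (_ + _).
  rewrite (eq_bigr (fun _ => 1)); last first.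
    move=> j /negbTE hj; case: ifP => // /eqP hjd.
    by move: hj; rewrite (_ : j = Ordinal db) ?eqxx //; apply: val_inj.
  rewrite sumr_const cardC1 card_ord.
  by [].
have -> : (tt + (b.-1)%:R) ^+ L =
    \prod_(i : 'I_L) \sum_(j : 'I_b) (if (j : nat) == d then tt else 1).
  by rewrite (eq_bigr (fun _ => tt + (b.-1)%:R)) ?prodr_const ?card_ord // => i _.
rewrite bigA_distr_bigA /=; apply: eq_bigr => X _.
rewrite -big_mkcond /= /strcount -prodr_const.
by apply: eq_bigl => i; rewrite inE.
Qed.


Lemma tt0 : 0 < tt. Proof. by rewrite /tt invr_gt0. Qed.

Definition rho : R := (tt + (b.-1)%:R) / b%:R.

Lemma bRE : (b%:R : R) = (b.-1)%:R + 1.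
Proof. by rewrite natr1 prednK // bgt0. Qed.

Lemma rho_ge0 : 0 <= rho.
Proof. apply: divr_ge0; [apply: addr_ge0; [exact/ltW/tt0|exact: ler0n] | exact: ler0n]. Qed.

Lemma rho_lt1 : rho < 1.
Proof.
rewrite /rho ltr_pdivrMr ?bR0 // mul1r [X in _ < X]bRE /tt.
lra.
Qed.


Lemma vterm_ge0 kk M L : 0 <= vterm R b d kk M L.
Proof.
apply: sumr_ge0 => X _; apply: mulr_ge0; first by rewrite invr_ge0 ltW // bL0.
apply: exprn_ge0; have := xval_lt1 X; rewrite /xval; lra.
Qed.

Lemma vterm_le kk M L : vterm R b d kk M L <= tt ^- kk * rho ^+ L.
Proof.
apply: (@le_trans _ _ (\sum_(X : {ffun 'I_L -> 'I_b} | strcount d X == kk) (b%:R ^- L))).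
  apply: ler_sum => X _; rewrite -[X in _ <= X]mulr1; apply: ler_wpM2l.
    by rewrite invr_ge0 ltW // bL0.
  have := xval_lt1 X; have := xval_ge0 X; rewrite /xval => h1 h2.
  by apply: exprn_ile1; lra.
apply: (@le_trans _ _ (\sum_(X : {ffun 'I_L -> 'I_b}) (b%:R ^- L * tt ^- kk) * tt ^+ strcount d X)).
  rewrite [X in _ <= X](bigID (fun X : {ffun 'I_L -> 'I_b} => strcount d X == kk)) /=.
  rewrite -[X in X <= _]addr0; apply: lerD; last first.
    apply: sumr_ge0 => X _; apply: mulr_ge0; last exact/exprn_ge0/ltW/tt0.
    by apply: mulr_ge0; rewrite ?invr_ge0 ?ltW ?bL0 ?exprn_gt0 ?tt0.
  apply/ler_sum => X /eqP ->; rewrite -mulrA mulVf ?mulr1 //.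
  by apply: lt0r_neq0; rewrite exprn_gt0 ?tt0.
rewrite -big_distrr /= gen_sum /rho expr_div_n.
by rewrite le_eqVlt; apply/orP; left; apply/eqP; ring.
Qed.

Definition VB (kk : nat) : R := tt ^- kk * (1 - rho)^-1.

Lemma vseries_le kk M N : \sum_(0 <= L < N) vterm R b d kk M L <= VB kk.
Proof.
apply: (@le_trans _ _ (\sum_(0 <= L < N) tt ^- kk * rho ^+ L)).
  by apply: ler_sum => L _; apply: vterm_le.
rewrite -big_distrr /= /VB; apply: ler_wpM2l; first by rewrite invr_ge0 exprn_ge0 // ltW // tt0.
by apply: geom_sum_le; rewrite rho_ge0 rho_lt1.
Qed.

Lemma vseries_cvg kk M : cvgn (series (fun L => vterm R b d kk M L)).
Proof.
apply: nondecreasing_is_cvgn.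
  by apply: nondecreasing_series => L _ _; apply: vterm_ge0.
by exists (VB kk) => _ [N _ <-]; apply: vseries_le.
Qed.

Lemma v_le kk M : v R b d kk M <= VB kk.
Proof.
rewrite /v; apply: limr_le; first exact: vseries_cvg.
by apply: nearW => N; apply: vseries_le.
Qed.


Lemma E1 (u : R^nat) l : series u @ \oo --> l ->
  (\sum_(0 <= i <oo) (u i)%:E = l%:E)%E.
Proof.
move=> h.
rewrite (_ : (fun N => \sum_(0 <= i < N) (u i)%:E)%E = EFin \o series u); last first.
  by apply/funext => N; rewrite /= sumEFin.
by rewrite EFin_lim; [rewrite (cvg_lim _ h) | exact: cvgP h].
Qed.

Lemma E2 (u : R^nat) l : (forall i, 0 <= u i) ->
  (\sum_(0 <= i <oo) (u i)%:E = l%:E)%E -> series u @ \oo --> l.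
Proof.
move=> u0 hl.
have c : cvgn (fun N => \sum_(0 <= i < N) (u i)%:E)%E.
  by apply: is_cvg_nneseries => i _ _; rewrite lee_fin.
have h : (fun N => \sum_(0 <= i < N) (u i)%:E)%E @ \oo --> l%:E by rewrite -hl; exact: c.
have e : fine \o (fun N => \sum_(0 <= i < N) (u i)%:E)%E = series u.
  by apply/funext => N; rewrite /= sumEFin.
by rewrite -e; apply: fine_cvg.
Qed.

Lemma geomX (n L : nat) (X : {ffun 'I_L -> 'I_b}) : (0 < n)%N ->
  series (fun M => b%:R ^- L * (1 - xval X) ^+ M / (n.+1%:R ^+ M.+1)) @ \oo -->
  ((n * b ^ L + strval X)%:R : R)^-1.
Proof.
move=> np; have x0 := xval_ge0 X; have x1 := xval_lt1 X.
have n0 : (0 : R) < n.+1%:R by rewrite ltr0n.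
pose a : R := b%:R ^- L / n.+1%:R; pose z : R := (1 - xval X) / n.+1%:R.
have -> : (fun M => b%:R ^- L * (1 - xval X) ^+ M / (n.+1%:R ^+ M.+1)) = geometric a z.
  apply/funext => M; rewrite /= /a /z expr_div_n exprSr invfM; ring.
have -> : ((n * b ^ L + strval X)%:R : R)^-1 = a * (1 - z)^-1.
  rewrite /a /z /xval natrD natrM natrX.
  have bl := bL0 L.
  have h1 : (n%:R : R) * b%:R ^+ L + (strval X)%:R != 0.
    have : (0 : R) < n%:R * b%:R ^+ L by rewrite mulr_gt0 // ltr0n.
    have : (0 : R) <= (strval X)%:R by rewrite ler0n.
    move=> ? ?; apply: lt0r_neq0; lra.
  have : (0 : R) <= (strval X)%:R by rewrite ler0n.
  have : (0 : R) <= n%:R by rewrite ler0n.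
  move=> hn hs.
  rewrite -natr1; field.
  have e1 : (n%:R : R) + 1 != 0 by apply: lt0r_neq0; lra.
  have e3 : (b%:R : R) ^+ L * (n%:R + 1) - (b%:R ^+ L - (strval X)%:R) != 0.
    have : (0 : R) < n%:R * b%:R ^+ L by rewrite mulr_gt0 // ltr0n.
    move=> ?; apply: lt0r_neq0; lra.
  by rewrite e1 e3 andbT; apply: lt0r_neq0.
apply: cvg_geometric_series.
rewrite ger0_norm; last by rewrite /z divr_ge0 ?ler0n //; lra.
rewrite /z ltr_pdivrMr // mul1r; rewrite -natr1.
have : (1 : R) <= n%:R by rewrite ler1n.
lra.
Qed.


Definition Asum (n kk L : nat) : R :=
  \sum_(X : {ffun 'I_L -> 'I_b} | strcount d X == kk) ((n * b ^ L + strval X)%:R : R)^-1.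

Definition wq (n kk L M : nat) : R := vterm R b d kk M L / (n.+1%:R ^+ M.+1).

Lemma wq_ge0 n kk L M : 0 <= wq n kk L M.
Proof. by rewrite /wq divr_ge0 ?vterm_ge0 // exprn_ge0 // ler0n. Qed.

Lemma sumM_wq n kk L : (0 < n)%N ->
  (\sum_(0 <= M <oo) (wq n kk L M)%:E = (Asum n kk L)%:E)%E.
Proof.
move=> np.
have e : forall M, (wq n kk L M)%:E = (\sum_(X : {ffun 'I_L -> 'I_b} | strcount d X == kk)
    (b%:R ^- L * (1 - xval X) ^+ M / (n.+1%:R ^+ M.+1))%:E)%E.
  by move=> M; rewrite sumEFin /wq /vterm mulr_suml.
rewrite (_ : (fun N => \sum_(0 <= M < N) (wq n kk L M)%:E)%E = (fun N =>
   \sum_(0 <= M < N) \sum_(X : {ffun 'I_L -> 'I_b} | strcount d X == kk)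
    (b%:R ^- L * (1 - xval X) ^+ M / (n.+1%:R ^+ M.+1))%:E)%E); last first.
  by apply/funext => N; apply: eq_bigr => M _; rewrite e.
rewrite nneseries_sum; last first.
  move=> X M _; rewrite lee_fin; apply: mulr_ge0; last by rewrite invr_ge0 exprn_ge0 // ler0n.
  apply: mulr_ge0; first by rewrite invr_ge0 ltW // bL0.
  by apply: exprn_ge0; have := xval_lt1 X; lra.
rewrite /Asum -sumEFin; apply: eq_bigr => X _.
apply: E1; exact: geomX.
Qed.

Lemma sumL_wq n kk M :
  (\sum_(0 <= L <oo) (wq n kk L M)%:E = (v R b d kk M / (n.+1%:R ^+ M.+1))%:E)%E.
Proof.
apply: E1.
rewrite (_ : series (fun L => wq n kk L M) =
   (fun N => series (fun L => vterm R b d kk M L) N / (n.+1%:R ^+ M.+1))); last first.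
  by apply/funext => N; rewrite /series /= /wq mulr_suml.
apply: cvgMr_tmp; exact: vseries_cvg.
Qed.

Lemma ordE (f : nat -> \bar R) :
  (\sum_(i <oo | true) f i = \sum_(0 <= i <oo) f i)%E.
Proof. by apply/congr_lim/funext => N; rewrite big_mkord. Qed.

Lemma interchange n kk : (0 < n)%N ->
  (\sum_(0 <= L <oo) (Asum n kk L)%:E =
   \sum_(0 <= M <oo) (v R b d kk M / (n.+1%:R ^+ M.+1))%:E)%E.
Proof.
move=> np.
have e1 : forall f : nat -> nat -> \bar R,
    (\sum_(i <oo | true) \sum_(j <oo | true) f i j = \sum_(0 <= i <oo) \sum_(0 <= j <oo) f i j)%E.
  move=> f; rewrite ordE; apply/congr_lim/funext => N; apply: eq_bigr => i _; exact: ordE.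
have e2 : (\sum_(i <oo | true) \sum_(j <oo | true) (wq n kk i j)%:E =
    \sum_(j <oo | true) \sum_(i <oo | true) (wq n kk i j)%:E)%E.
  by apply: (@nneseries_interchange _ (fun i j => (wq n kk i j)%:E) xpredT xpredT) => i j; rewrite lee_fin wq_ge0.
rewrite e1 in e2; rewrite (e1 (fun j i => (wq n kk i j)%:E)) in e2.
transitivity (\sum_(0 <= L <oo) \sum_(0 <= M <oo) (wq n kk L M)%:E)%E.
  apply/congr_lim/funext => N; apply: eq_bigr => L _.
  by rewrite sumM_wq.
rewrite e2; apply/congr_lim/funext => N; apply: eq_bigr => M _.
by rewrite sumL_wq.
Qed.


Definition rhsf (n kk M : nat) : R := v R b d kk M / (n.+1%:R ^+ M.+1).

Lemma VB_ge0 kk : 0 <= VB kk.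
Proof.
rewrite /VB mulr_ge0 // ?invr_ge0 ?exprn_ge0 ?ltW ?tt0 //.
by have := rho_lt1; lra.
Qed.

Lemma v_ge0 kk M : 0 <= v R b d kk M.
Proof.
rewrite /v; apply: limr_ge; first exact: vseries_cvg.
by apply: nearW => N; apply: sumr_ge0 => L _; apply: vterm_ge0.
Qed.

Lemma vterm_pos kk M : 0 < vterm R b d kk M kk.
Proof.
pose X0 : {ffun 'I_kk -> 'I_b} := [ffun _ => Ordinal db].
have hX0 : strcount d X0 == kk.
  apply/eqP; rewrite /strcount -[X in _ = X]card_ord; apply: eq_card => i.
  by rewrite !inE ffunE eqxx.
rewrite /vterm (bigD1 X0) //=.
have : 0 <= \sum_(X : {ffun 'I_kk -> 'I_b} | (strcount d X == kk) && (X != X0))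
    (b%:R : R) ^- kk * (1 - (strval X)%:R / b%:R ^+ kk) ^+ M.
  apply: sumr_ge0 => X _; apply: mulr_ge0; first by rewrite invr_ge0 ltW // bL0.
  by apply: exprn_ge0; have := xval_lt1 X; rewrite /xval; lra.
have : 0 < (b%:R : R) ^- kk * (1 - (strval X0)%:R / b%:R ^+ kk) ^+ M.
  apply: mulr_gt0; first by rewrite invr_gt0 bL0.
  by apply: exprn_gt0; have := xval_lt1 X0; rewrite /xval; lra.
lra.
Qed.

Lemma v_gt0 kk M : 0 < v R b d kk M.
Proof.
have c := @vseries_cvg kk M.
have nd : nondecreasing_seq (series (fun L => vterm R b d kk M L)).
  by apply: nondecreasing_series => L _ _; apply: vterm_ge0.
apply: (lt_le_trans _ (nondecreasing_cvgn_le nd c kk.+1)).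
rewrite /series /= big_nat_recr //=.
have : 0 <= \sum_(0 <= L < kk) vterm R b d kk M L.
  by apply: sumr_ge0 => L _; apply: vterm_ge0.
have := @vterm_pos kk M; lra.
Qed.

Lemma rhs_gt0 n kk M : 0 < rhsf n kk M.
Proof. by rewrite /rhsf divr_gt0 ?v_gt0 // exprn_gt0 // ltr0n. Qed.

Lemma rhs_le n kk M : (0 < n)%N -> rhsf n kk M <= VB kk * tt ^+ M.
Proof.
move=> np.
have c2 : (2 ^ M <= n.+1 ^ M.+1)%N.
  apply: (@leq_trans (2 ^ M.+1)); first by rewrite leq_exp2l.
  by rewrite leq_exp2r.
have c0 : (0 : R) < 2%:R ^+ M by rewrite exprn_gt0 // ltr0n.
have c2R : (2%:R ^+ M : R) <= n.+1%:R ^+ M.+1 by rewrite -!natrX ler_nat.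
rewrite /rhsf /tt.
apply: (@le_trans _ _ (VB kk / (n.+1%:R ^+ M.+1))).
  by apply: ler_wpM2r; [rewrite invr_ge0 exprn_ge0 // ler0n | apply: v_le].
apply: ler_wpM2l; first exact: VB_ge0.
by rewrite exprVn lef_pV2 ?posrE ?(lt_le_trans c0 c2R) ?c0 // -natrX.
Qed.

Lemma rhs_cvg n kk : (0 < n)%N -> cvgn (series (rhsf n kk)).
Proof.
move=> np.
apply: nondecreasing_is_cvgn.
  by apply: nondecreasing_series => M _ _; apply/ltW/rhs_gt0.
exists (VB kk * (1 - tt)^-1) => _ [N _ <-].
apply: (@le_trans _ _ (\sum_(0 <= M < N) VB kk * tt ^+ M)).
  by apply: ler_sum => M _; apply: rhs_le.
rewrite /series /= -big_distrr /=; apply: ler_wpM2l; first exact: VB_ge0.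
by apply: geom_sum_le; rewrite ltW ?tt0 //= /tt; lra.
Qed.

Lemma Aseries n kk : (0 < n)%N ->
  series (Asum n kk) @ \oo --> limn (series (rhsf n kk)).
Proof.
move=> np; apply: E2.
  by move=> L; apply: sumr_ge0 => X _; rewrite invr_ge0 ler0n.
rewrite interchange //; apply: E1; exact: rhs_cvg.
Qed.


Definition lhsf (n k m : nat) : R :=
  if [&& (0 < m)%N, (len b n <= len b m)%N, ld b (len b n) m == n & kcount b d m == k]
  then (m%:R : R)^-1 else 0.

Lemma lhs_ge0 n k m : 0 <= lhsf n k m.
Proof. by rewrite /lhsf; case: ifP => // _; rewrite invr_ge0 ler0n. Qed.

Lemma lhs_window n k L r : (0 < n)%N -> (kcount b d n <= k)%N -> (r < b ^ L)%N ->
  lhsf n k (n * b ^ L + r) =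
  if cnt b d L r == (k - kcount b d n)%N then ((n * b ^ L + r)%:R : R)^-1 else 0.
Proof.
move=> np nk rL; rewrite /lhsf len_window // ld_window // kcount_window // eqxx.
have -> : (0 < n * b ^ L + r)%N by rewrite addn_gt0 muln_gt0 np expn_gt0 bgt0.
rewrite leq_addr /=.
have -> : (kcount b d n + cnt b d L r == k) = (cnt b d L r == k - kcount b d n)%N.
  by apply/eqP/eqP; lia.
by [].
Qed.

Lemma lhs_zero n k m : (forall L, ~~ ((n * b ^ L <= m) && (m < n.+1 * b ^ L)))%N ->
  lhsf n k m = 0.
Proof.
move=> H; rewrite /lhsf; case: ifP => // /and4P [_ h1 /eqP h2 _].
have [L [r [rL e]]] := cond_window b2 h1 h2.
have := H L; rewrite e => /negP; case; apply/andP; split; first exact: leq_addr.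
by rewrite mulSn; lia.
Qed.

Lemma window_sum n k L : (0 < n)%N -> (kcount b d n <= k)%N ->
  \sum_(n * b ^ L <= m < n.+1 * b ^ L) lhsf n k m = Asum n (k - kcount b d n) L.
Proof.
move=> np nk.
rewrite -[X in \sum_(X <= _ < _) _]add0n big_addn.
rewrite (_ : (n.+1 * b ^ L - n * b ^ L) = b ^ L)%N; last by rewrite mulSn addnK.
rewrite big_mkord.
rewrite (eq_bigr (fun r : 'I_(b ^ L) =>
   if cnt b d L r == (k - kcount b d n)%N then ((n * b ^ L + r)%:R : R)^-1 else 0)); last first.
  by move=> r _; rewrite addnC lhs_window.
rewrite (reindex (@hval b b2 L)); last by apply: onW_bij; exact: hval_bij.
rewrite /Asum [RHS]big_mkcond; apply: eq_bigr => X _ /=.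
by rewrite (strcount_cnt d b2).
Qed.

Lemma Qsub n k J : (0 < n)%N -> (kcount b d n <= k)%N ->
  \sum_(0 <= m < n * b ^ J) lhsf n k m = series (Asum n (k - kcount b d n)) J.
Proof.
move=> np nk; elim: J => [|J IH].
  rewrite expn0 muln1 /series /= [RHS]big_geq // big_nat_cond big1 // => m /andP [/andP [_ hm] _].
  apply: lhs_zero => L; apply/negP => /andP [h _]; have : (n <= n * b ^ L)%N by rewrite leq_pmulr // expn_gt0 bgt0.
  lia.
have h1 : (n * b ^ J <= n.+1 * b ^ J)%N by rewrite leq_mul2r leqnSn orbT.
have h2 : (n.+1 * b ^ J <= n * b ^ J.+1)%N.
  rewrite expnS mulnA leq_mul2r; apply/orP; right; nia.
rewrite (@big_cat_nat R _ _ (n * b ^ J) 0 (n * b ^ J.+1)) //; last exact: leq_trans h1 h2.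
rewrite IH (@big_cat_nat R _ _ (n.+1 * b ^ J) (n * b ^ J) (n * b ^ J.+1)) //.
rewrite window_sum //.
have gap : \sum_(n.+1 * b ^ J <= i < n * b ^ J.+1) lhsf n k i = 0.
  rewrite big_nat_cond big1 // => m /andP [/andP [hm1 hm2] _]; apply: lhs_zero => L.
  apply/negP => /andP [w1 w2]; case: (leqP L J) => hL.
    have : (n.+1 * b ^ L <= n.+1 * b ^ J)%N by rewrite leq_mul2l leq_pexp2l ?orbT // bgt0.
    lia.
  have : (n * b ^ J.+1 <= n * b ^ L)%N by rewrite leq_mul2l leq_pexp2l ?orbT // bgt0.
  lia.
rewrite gap /series /= big_nat_recr //=.
by rewrite addr0.
Qed.

End RealPart.


Unset Implicit Arguments.

Theorem mainTheorem7 (R : realType) (b d k n : nat) :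
  (2 <= b)%N -> (d < b)%N -> (0 < n)%N -> (kcount b d n <= k)%N ->
  let l := len b n in
  let lhs := fun m : nat =>
    if [&& (0 < m)%N, (l <= len b m)%N, ld b l m == n & kcount b d m == k]
    then (m%:R : R)^-1 else 0 in
  let rhs := fun m : nat =>
    v R b d (k - kcount b d n) m / (n.+1%:R ^+ m.+1) in
  (exists S : R,
     (fun N => \sum_(0 <= m < N) lhs m) @ \oo --> S /\
     (fun N => \sum_(0 <= m < N) rhs m) @ \oo --> S) /\
  (forall m, 0 < rhs m) /\
  (exists C r : R, 0 < C /\ 0 <= r < 1 /\ forall m, rhs m <= C * r ^+ m).
Proof.
move=> b2 db np nk l lhs rhs.
have hrhs : rhs = rhsf R b d n (k - kcount b d n)%N by [].
have hQ : (fun N => \sum_(0 <= m < N) lhs m) =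
          (fun N => \sum_(0 <= m < N) lhsf R b d n k m) by [].
rewrite hQ hrhs; clear hQ hrhs rhs lhs.
set kp := (k - kcount b d n)%N.
split.
  exists (limn (series (rhsf R b d n kp))); split; last first.
    exact: (rhs_cvg b2 db np).
  pose Q := fun N => \sum_(0 <= m < N) lhsf R b d n k m.
  have As : series (Asum R b d n kp) @ \oo --> limn (series (rhsf R b d n kp)).
    exact: (Aseries b2 db np).
  have ndA : nondecreasing_seq (series (Asum R b d n kp)).
    by apply: nondecreasing_series => L _ _; apply: sumr_ge0 => X _; rewrite invr_ge0 ler0n.
  have cA : cvgn (series (Asum R b d n kp)) by exact: cvgP As.
  have limA : limn (series (Asum R b d n kp)) = limn (series (rhsf R b d n kp)).
    exact: cvg_lim As.
  have ndQ : nondecreasing_seq Q.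
    by apply: nondecreasing_series => m _ _; apply: lhs_ge0.
  have QA : forall J, Q (n * b ^ J)%N = series (Asum R b d n kp) J.
    by move=> J; rewrite /Q (Qsub R b2 db J np nk).
  have Qle : forall N, Q N <= limn (series (rhsf R b d n kp)).
    move=> N; apply: (@le_trans _ _ (Q (n * b ^ N)%N)).
      apply: ndQ; apply: (@leq_trans (b ^ N)); first exact/ltnW/ltn_expl.
      by rewrite leq_pmull.
    by rewrite QA -limA; apply: nondecreasing_cvgn_le.
  have cQ : cvgn Q.
    by apply: nondecreasing_is_cvgn => //; exists (limn (series (rhsf R b d n kp))) => _ [N _ <-].
  suff <- : limn Q = limn (series (rhsf R b d n kp)) by exact: cQ.
  apply/eqP; rewrite eq_le; apply/andP; split.
    by apply: limr_le => //; apply: nearW.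
  rewrite -limA; apply: limr_le => //; apply: nearW => J.
  by rewrite -QA; apply: nondecreasing_cvgn_le.
split; first by move=> m; apply: (rhs_gt0 R b2 db).
exists (VB R b kp), (tt R); split.
  rewrite /VB mulr_gt0 // ?invr_gt0 ?exprn_gt0 ?(tt0 R) //.
  by have := rho_lt1 R b2; lra.
split; first by rewrite ltW ?(tt0 R) //= /tt; lra.
by move=> m; apply: (rhs_le R b2 db kp m np).
Qed.
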